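(* For every EIC problem $(R,B)$, $(D)_{(R,B)}\le 2\cdot (C)_{(R,B)}$.
   Context: An EIC problem is a pair $(R,B)$ of matrices in $\mathbb{F}_2^{n\times m}$ with disjoint supports; node $u\in[n]$ needs block $a\in[m]$ if $R_{ua}=1$ and has block $a$ if $B_{ua}=1$. Let $P=\{(u,a):R_{ua}=1\}$, $B_u$ the $u$-th row of $B$, $\mathrm{diag}(B_u)$ the diagonal matrix with $B_u$ on the diagonal, and $\boldsymbol e_a$ the $a$-th standard basis row vector of $\mathbb{F}_2^m$. A centralized linear broadcast solution is a matrix $\beta\in\mathbb{F}_2^{h\times m}$ such that for every $(u,a)\in P$ there is $\boldsymbol\alpha\in\mathbb{F}_2^{h+m}$ with $\boldsymbol e_a=\boldsymbol\alpha\cdot\left[\begin{smallmatrix}\beta\\ \mathrm{diag}(B_u)\end{smallmatrix}\right]$; its length is $h$, and $(C)_{(R,B)}$ is the minimum length of such a solution. A (decentralized) linear broadcast solution is a tuple of matrices $\beta^{(1)},\dots,\beta^{(n)}$ with $\beta^{(u)}\in\mathbb{F}_2^{h_u\times m}$ ($h_u\ge 0$) such that (i) for each $u$ and each $a$ with $B_{ua}=0$, the $a$-th column of $\beta^{(u)}$ is zero, and (ii) for each $(u,a)\in P$ there is $\boldsymbol\alpha\in\mathbb{F}_2^{\sum_\ell h_\ell+m}$ with $\boldsymbol e_a=\boldsymbol\alpha\cdot\left[\begin{smallmatrix}\beta^{(1)}\\ \vdots\\ \beta^{(n)}\\ \mathrm{diag}(B_u)\end{smallmatrix}\right]$. Its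 length is $\sum_u h_u$, and $(D)_{(R,B)}$ is the minimum length of such a solution. *)

(* Defs.v *)
From HB Require Import structures.
From mathcomp Require Import all_boot all_order all_algebra.
Set Implicit Arguments. Unset Strict Implicit. Unset Printing Implicit Defensive.
Import GRing.Theory.
Local Open Scope ring_scope.

(* Matrices over F_2. Nodes are 'I_n, blocks are 'I_m. *)

Definition EIC_problem (n m : nat) (R B : 'M['F_2]_(n, m)) : Prop :=
  forall (u : 'I_n) (a : 'I_m), R u a != 0 -> B u a = 0.

Definition e_vec (m : nat) (a : 'I_m) : 'rV['F_2]_m := delta_mx 0 a.

Definition central_sol (n m h : nat) (R B : 'M['F_2]_(n, m))
    (beta : 'M['F_2]_(h, m)) : Prop :=
  forall (u : 'I_n) (a : 'I_m), R u a = 1 ->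
    exists alpha : 'rV['F_2]_(h + m),
      e_vec a = alpha *m col_mx beta (diag_mx (row u B)).

Definition decentral_sol (n m : nat) (R B : 'M['F_2]_(n, m))
    (hs : 'I_n -> nat) (betas : forall u : 'I_n, 'M['F_2]_(hs u, m)) : Prop :=
  (forall (u : 'I_n) (a : 'I_m), B u a = 0 ->
     forall k : 'I_(hs u), betas u k a = 0) /\
  (forall (u : 'I_n) (a : 'I_m), R u a = 1 ->
    exists alpha : 'rV['F_2]_((\sum_(l < n) hs l)%N + m),
      e_vec a = alpha *m col_mx (mxcol betas) (diag_mx (row u B))).

Definition is_C (n m : nat) (R B : 'M['F_2]_(n, m)) (c : nat) : Prop :=
  (exists beta : 'M['F_2]_(c, m), central_sol R B beta) /\
  (forall (h : nat) (beta : 'M['F_2]_(h, m)), central_sol R B beta -> (c <= h)%N).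

Definition is_D (n m : nat) (R B : 'M['F_2]_(n, m)) (d : nat) : Prop :=
  (exists (hs : 'I_n -> nat) (betas : forall u, 'M['F_2]_(hs u, m)),
      decentral_sol R B betas /\ (\sum_(u < n) hs u)%N = d) /\
  (forall (hs : 'I_n -> nat) (betas : forall u, 'M['F_2]_(hs u, m)),
      decentral_sol R B betas -> (d <= \sum_(u < n) hs u)%N).

(* Main.v *)
Require Import Defs.
From mathcomp Require Import all_boot all_order all_algebra.
Import GRing.Theory.
Local Open Scope ring_scope.

Lemma F2c (x : 'F_2) : x = 0 \/ x = 1.
Proof. case: x => [[|[|k]] Hk]; [left|right|]; try by apply/val_inj. by []. Qed.

Lemma F2n1 (x : 'F_2) : x != 1 -> x = 0.
Proof. by case: (F2c x) => ->. Qed.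

Lemma e_vecE m (a j : 'I_m) : e_vec a 0 j = (j == a)%:R.
Proof. by rewrite /e_vec mxE. Qed.

Lemma sub_mxcol {n m} {hs : 'I_n -> nat} (betas : forall u, 'M['F_2]_(hs u, m)) u :
  (betas u <= mxcol betas)%MS.
Proof.
apply/row_subP => k.
by rewrite -[betas u](mxcolK betas) /submxcol row_rowsub row_sub.
Qed.

Section Constr.
Variables (n m c : nat) (R B : 'M['F_2]_(n, m)) (beta : 'M['F_2]_(c, m)).
Hypothesis Hbeta : central_sol R B beta.
Hypothesis Hhold : forall u a, R u a = 1 -> exists w, B w a == 1.

Definition Dg (u : 'I_n) := diag_mx (row u B).
Definition alphaP (p : 'I_n * 'I_m) : 'rV['F_2]_(c + m) :=
  odflt 0 [pick al : 'rV['F_2]_(c + m) | e_vec p.2 == al *m col_mx beta (Dg p.1)].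
Definition vv p : 'rV['F_2]_m :=
  if R p.1 p.2 == 1 then lsubmx (alphaP p) *m beta else 0.
Definition Yv p : 'rV['F_2]_m := rsubmx (alphaP p) *m Dg p.1.
Definition hold (p : 'I_n * 'I_m) : 'I_n := odflt p.1 [pick w | B w p.2 == 1].
Definition Zv p : 'rV['F_2]_m := if B (hold p) p.2 == 1 then e_vec p.2 else 0.
Definition M : 'M['F_2]_(#|{: 'I_n * 'I_m}|, m) := \matrix_k vv (enum_val k).
Definition r := \rank M.
Definition pp (i : 'I_r) := enum_val (maxrankfun M i).
Definition Ys u := [set i : 'I_r | (pp i).1 == u].
Definition Zs u := [set i : 'I_r | hold (pp i) == u].
Definition hs u := (#|Ys u| + #|Zs u|)%N.
Definition Ym u : 'M['F_2]_(#|Ys u|, m) := \matrix_k Yv (pp (enum_val k)).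
Definition Zm u : 'M['F_2]_(#|Zs u|, m) := \matrix_k Zv (pp (enum_val k)).
Definition betas u : 'M['F_2]_(hs u, m) := col_mx (Ym u) (Zm u).

Lemma card_fib (f : 'I_r -> 'I_n) : (\sum_u #|[set i | f i == u]| = r)%N.
Proof.
rewrite -[X in _ = X]card_ord -sum1_card (partition_big f predT) //=.
by apply: eq_bigr => u _; rewrite -sum1_card; apply: eq_bigl => i; rewrite inE.
Qed.

Lemma sum_hs : (\sum_u hs u <= 2 * c)%N.
Proof.
rewrite /hs big_split /= !card_fib.
have : (r <= c)%N.
  apply: leq_trans (rank_leq_row beta); apply: mxrankS.
  apply/row_subP => k; rewrite rowK /vv; case: ifP => _.
    exact: submxMl.
  exact: sub0mx.
by move=> H; rewrite mul2n -addnn leq_add.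
Qed.

Lemma support u a : B u a = 0 -> forall k : 'I_(hs u), betas u k a = 0.
Proof.
move=> Bua k; rewrite /betas -[k]splitK; case: (split k) => k' /=.
  rewrite col_mxEu /Ym mxE /Yv /Dg mul_mx_diag mxE mxE.
  have := enum_valP k'; rewrite inE => /eqP ->.
  by rewrite mxE Bua mulr0.
rewrite col_mxEd /Zm mxE /Zv.
have := enum_valP k'; rewrite inE => /eqP ->.
case: ifP => Hb; last by rewrite mxE. rewrite /e_vec mxE /=; case: eqP => //= ea.
by move: Hb; rewrite -ea Bua.
Qed.

Lemma vv_sub i : (vv (pp i) <= mxcol betas)%MS.
Proof.
set p := pp i.
have HY : (Yv p <= mxcol betas)%MS.
  have Hi : i \in Ys p.1 by rewrite inE.
  apply: (submx_trans _ (sub_mxcol betas p.1)).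
  have HYm : (Ym p.1 <= betas p.1)%MS by rewrite /betas -addsmxE addsmxSl.
  apply: (submx_trans _ HYm).
  have <- : row (enum_rank_in Hi i) (Ym p.1) = Yv p.
    by rewrite rowK enum_rankK_in.
  exact: row_sub.
have HZ : (Zv p <= mxcol betas)%MS.
  have Hi : i \in Zs (hold p) by rewrite inE.
  apply: (submx_trans _ (sub_mxcol betas (hold p))).
  have HZm : (Zm (hold p) <= betas (hold p))%MS by rewrite /betas -addsmxE addsmxSr.
  apply: (submx_trans _ HZm).
  have <- : row (enum_rank_in Hi i) (Zm (hold p)) = Zv p.
    by rewrite rowK enum_rankK_in.
  exact: row_sub.
rewrite /vv; case: ifP => [/eqP HR|]; last by rewrite sub0mx.
have [w /eqP Hw] := Hhold _ _ HR.
have HZe : Zv p = e_vec p.2.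
  rewrite /Zv /hold; case: pickP => [w' /= Hw'|]; first by rewrite Hw'.
  by move/(_ w); rewrite Hw eqxx.
have [al Hal] := Hbeta _ _ HR.
have He : e_vec p.2 = alphaP p *m col_mx beta (Dg p.1).
  rewrite /alphaP; case: pickP => [al' /eqP // |].
  by move/(_ al); rewrite /Dg -Hal eqxx.
have -> : lsubmx (alphaP p) *m beta = Zv p - Yv p.
  have Hs := mul_row_col (lsubmx (alphaP p)) (rsubmx (alphaP p)) beta (Dg p.1).
  rewrite HZe He.
  have -> : alphaP p *m col_mx beta (Dg p.1) = lsubmx (alphaP p) *m beta + Yv p.
    by rewrite -Hs hsubmxK.
  by rewrite addrK.
apply: addmx_sub => //.
by rewrite -scaleN1r scalemx_sub.
Qed.

Lemma decode u a : R u a = 1 ->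
  exists alpha : 'rV_((\sum_(l < n) hs l)%N + m),
      e_vec a = alpha *m col_mx (mxcol betas) (diag_mx (row u B)).
Proof.
move=> HR; apply/submxP; rewrite -addsmxE.
have HM : (M <= mxcol betas)%MS.
  have H1 : (M <= rowsub (maxrankfun M) M)%MS by rewrite (eq_maxrowsub M) submx_refl.
  apply: (submx_trans H1).
  apply/row_subP => i; rewrite row_rowsub rowK; exact: vv_sub.
have Hv : (vv (u, a) <= mxcol betas)%MS.
  apply: submx_trans HM.
  have <- : row (enum_rank (u, a)) M = vv (u, a) by rewrite rowK enum_rankK.
  exact: row_sub.
have [al Hal] := Hbeta _ _ HR.
have He : e_vec a = alphaP (u, a) *m col_mx beta (Dg u).
  rewrite /alphaP; case: pickP => [al' /eqP // |].
  by move/(_ al); rewrite /Dg -Hal eqxx.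
have -> : e_vec a = vv (u, a) + Yv (u, a).
  by rewrite He -[alphaP _ in LHS]hsubmxK mul_row_col /vv /= HR eqxx.
apply: addmx_sub_adds => //.
exact: submxMl.
Qed.

End Constr.


Lemma holder n m (R B : 'M['F_2]_(n, m)) (hs0 : 'I_n -> nat)
  (betas0 : forall u, 'M['F_2]_(hs0 u, m)) :
  decentral_sol R B betas0 -> forall u a, R u a = 1 -> exists w, B w a == 1.
Proof.
move=> [Hsupp Hdec] u a HR.
case: (boolP [exists w, B w a == 1]) => [/existsP //|/existsPn Hn].
have H0 w : B w a = 0 by apply: F2n1; apply: Hn.
have [al Hal] := Hdec u a HR.
have Hc : col a (col_mx (mxcol betas0) (diag_mx (row u B))) = 0.
  rewrite col_col_mx col_mxcol.
  have -> : \mxcol_i col a (betas0 i) = 0.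
    rewrite -mxcol0.
    apply: eq_mxcol => i; apply/matrixP => k j.
    by rewrite !mxE (Hsupp i a (H0 i)).
  have -> : col a (diag_mx (row u B)) = 0.
    apply/matrixP => k j; rewrite !mxE.
    by case: eqP => [->|]; rewrite ?H0 ?mul0rn ?mulr0n.
  by apply/matrixP => k j; rewrite !mxE; case: split => ?; rewrite mxE.
have : col a (e_vec a) = 0.
  by rewrite Hal colE -mulmxA -colE Hc mulmx0.
by move/matrixP/(_ 0 0); rewrite !mxE /= eqxx.
Qed.

Theorem theorem4 (n m : nat) (R B : 'M['F_2]_(n, m)) (c d : nat) :
  EIC_problem R B -> is_C R B c -> is_D R B d -> (d <= 2 * c)%N.
Proof.
move=> _ [[beta Hb] _] [[hs0 [betas0 [Hds _]]] Hmin].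
have Hh := holder _ _ _ _ _ _ Hds.
apply: leq_trans (sum_hs _ _ _ R B beta).
apply: Hmin; split.
  exact: support.
exact: (decode _ _ _ _ _ _ Hb Hh).
Qed.
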